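(* Let $n\ge 3$ be an integer and $\mathbf a=(a_0,\dots,a_n)\in\mathbb{Z}_3^{n+1}$ with $\prod_i a_i\neq 0$. (1) Suppose $n=3$. Then $X_{\mathbf a}$ has a $\mathbb{Q}_3$-rational point if and only if one of the following holds: (i) $v_3(\mathbf a)\sim(0,0,0,0)$, $(0,0,0,1)$, $(0,0,1,1)$ or $(0,0,1,2)$; (ii) $v_3(\mathbf a)\sim(0,0,0,2)$ and, normalizing so that $v_3(\mathbf a)=(0,0,0,2)$ (that is, for $\mathbf b=(b_0,\dots,b_3)$ with $\mathbf b\simeq\mathbf a$ and $v_3(\mathbf b)=(0,0,0,2)$), the set of residue classes modulo $9$ of $\pm b_0,\pm b_1,\pm b_2$ is not equal to the set of classes of $\pm1,\pm2,\pm4$. (2) Suppose $n\ge 4$. Then $X_{\mathbf a}$ has a $\mathbb{Q}_3$-rational point.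
   Context: $X_{\mathbf a}\subset\mathbb{P}^n_{\mathbb{Q}_3}$ is the diagonal cubic $\sum_{i=0}^na_ix_i^3=0$. $v_3$ is the $3$-adic valuation, applied componentwise: $v_3(\mathbf a)=(v_3(a_0),\dots,v_3(a_n))\in\mathbb{Z}^{n+1}$. For $\mathbf a,\mathbf b\in(\mathbb{Q}_3^\times)^{n+1}$ write $\mathbf a\simeq\mathbf b$ if there exist $\alpha,\alpha_0,\dots,\alpha_n\in\mathbb{Q}_3^\times$ and a permutation $\sigma$ of $\{0,\dots,n\}$ with $a_i=\alpha\,b_{\sigma(i)}\alpha_i^3$ for all $i$. The relation $\sim$ on $\mathbb{Z}^{n+1}$ is the one induced by $\simeq$ via $v_3$: $e\sim f$ iff $e=v_3(\mathbf a)$, $f=v_3(\mathbf b)$ for some $\mathbf a\simeq\mathbf b$ (equivalently, $f$ is obtained from $e$ by a permutation of coordinates, adding the same integer to all coordinates, and adding multiples of $3$ to individual coordinates). *)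

(* Defs.v *)
(* 3-adic integers Z_3 are modelled as the inverse limit
   lim Z/3^k Z: a 3-adic integer is a sequence x : nat -> int of
   representatives with x (k+1) = x k (mod 3^k); two such sequences are equal
   when they agree mod 3^k at every level k.  Q_3 = Z_3[1/3] is modelled by
   pairs (x, k) standing for x / 3^k. *)
From mathcomp Require Import all_boot all_order all_fingroup all_algebra.
Set Implicit Arguments. Unset Strict Implicit. Unset Printing Implicit Defensive.
Import Order.TTheory GRing.Theory Num.Theory.
Local Open Scope ring_scope.

Definition pow3 (k : nat) : int := ((3 ^ k)%N)%:Z.

Definition Z3 := (nat -> int).
Definition is_Z3 (x : Z3) : Prop :=
  forall k : nat, (x k.+1 == x k %[mod pow3 k])%Z.
Definition eqZ3 (x y : Z3) : Prop :=
  forall k : nat, (x k == y k %[mod pow3 k])%Z.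
Definition Z3zero : Z3 := fun _ => 0.
Definition Z3mul (x y : Z3) : Z3 := fun k => x k * y k.

Definition valZ3 (x : Z3) (m : nat) : Prop :=
  (pow3 m %| x m)%Z /\ ~~ (pow3 m.+1 %| x m.+1)%Z.

Definition Q3 := (Z3 * nat)%type.
Definition is_Q3 (p : Q3) : Prop := is_Z3 p.1.
Definition Q3eq (p q : Q3) : Prop :=
  eqZ3 (fun k => p.1 k * pow3 q.2) (fun k => q.1 k * pow3 p.2).
Definition Q3zero : Q3 := (Z3zero, 0%N).
Definition Q3ofZ3 (x : Z3) : Q3 := (x, 0%N).
Definition Q3add (p q : Q3) : Q3 :=
  (fun k => p.1 k * pow3 q.2 + q.1 k * pow3 p.2, (p.2 + q.2)%N).
Definition Q3mul (p q : Q3) : Q3 := (Z3mul p.1 q.1, (p.2 + q.2)%N).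
Definition Q3cube (p : Q3) : Q3 := Q3mul p (Q3mul p p).

Definition has_Q3_point (n : nat) (a : 'I_n.+1 -> Z3) : Prop :=
  exists x : 'I_n.+1 -> Q3,
    (forall i, is_Q3 (x i)) /\ (exists i, ~ Q3eq (x i) Q3zero) /\
    Q3eq (\big[Q3add/Q3zero]_(i < n.+1) Q3mul (Q3ofZ3 (a i)) (Q3cube (x i)))
         Q3zero.

Definition simeq (n : nat) (a b : 'I_n.+1 -> Z3) : Prop :=
  exists (al : Q3) (als : 'I_n.+1 -> Q3) (s : 'S_(n.+1)),
    is_Q3 al /\ ~ Q3eq al Q3zero /\
    (forall i, is_Q3 (als i) /\ ~ Q3eq (als i) Q3zero) /\
    forall i, Q3eq (Q3ofZ3 (a i))
                   (Q3mul (Q3mul al (Q3ofZ3 (b (s i)))) (Q3cube (als i))).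

Definition simv (n : nat) (e f : 'I_n.+1 -> int) : Prop :=
  exists (s : 'S_(n.+1)) (c : int) (m : 'I_n.+1 -> int),
    forall i, f i = e (s i) + c + 3 * m i.

Definition val_vec (n : nat) (a : 'I_n.+1 -> Z3) (e : 'I_n.+1 -> nat) : Prop :=
  forall i, valZ3 (a i) (e i).

Definition vec4 (l : seq nat) : 'I_4 -> nat := fun i => nth 0%N l i.

Definition val_sim4 (a : 'I_4 -> Z3) (l : seq nat) : Prop :=
  exists e : 'I_4 -> nat, val_vec a e /\ simv (fun i => (e i)%:Z) (fun i => (vec4 l i)%:Z).

Definition residues_full (b : 'I_4 -> Z3) : Prop :=
  forall r : int,
    (exists i : 'I_4, (i < 3)%N /\
        ((r == b i 2%N %[mod 9])%Z \/ (r == - b i 2%N %[mod 9])%Z)) <->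
    (exists t : int, t \in [:: 1; 2; 4; -1; -2; -4] /\ (r == t %[mod 9])%Z).

(* Main.v *)
Require Import Defs.
From mathcomp Require Import all_boot all_order all_fingroup all_algebra.
From mathcomp Require Import ring lra zify.
From Stdlib Require Import Classical.
Set Implicit Arguments. Unset Strict Implicit. Unset Printing Implicit Defensive.
Import Order.TTheory GRing.Theory Num.Theory.
Local Open Scope ring_scope.

Definition cong (d x y : int) : Prop := (d %| x - y)%Z.

Lemma congR d x : cong d x x.
Proof. by rewrite /cong subrr dvdz0. Qed.
Lemma congS d x y : cong d x y -> cong d y x.
Proof. by rewrite /cong -opprB rpredN. Qed.
Lemma congT d x y z : cong d x y -> cong d y z -> cong d x z.
Proof. rewrite /cong => h1 h2; have := rpredD h1 h2. by rewrite addrA subrK. Qed.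
Lemma congD d x y x' y' : cong d x x' -> cong d y y' -> cong d (x + y) (x' + y').
Proof. rewrite /cong => h1 h2; have := rpredD h1 h2.
by rewrite (_ : x - x' + (y - y') = x + y - (x' + y')) //; ring. Qed.
Lemma congN d x x' : cong d x x' -> cong d (- x) (- x').
Proof. by rewrite /cong -opprD rpredN. Qed.
Lemma congB d x y x' y' : cong d x x' -> cong d y y' -> cong d (x - y) (x' - y').
Proof. by move=> h1 h2; apply: congD => //; apply: congN. Qed.
Lemma congM d x y x' y' : cong d x x' -> cong d y y' -> cong d (x * y) (x' * y').
Proof. rewrite /cong => h1 h2.
have := rpredD (dvdz_mull x h2) (dvdz_mull y' h1).
by rewrite (_ : x * (y - y') + y' * (x - x') = x * y - x' * y') //; ring. Qed.
Lemma congX d x x' n : cong d x x' -> cong d (x ^+ n) (x' ^+ n).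
Proof. move=> h; elim: n => [|n ih]; first exact: congR.
by rewrite !exprS; apply: congM. Qed.
Lemma congMl d x y y' : cong d y y' -> cong d (x * y) (x * y').
Proof. by move=> h; apply: congM => //; apply: congR. Qed.
Lemma congMr d x x' y : cong d x x' -> cong d (x * y) (x' * y).
Proof. by move=> h; apply: congM => //; apply: congR. Qed.
Lemma cong_dvd d d' x y : (d' %| d)%Z -> cong d x y -> cong d' x y.
Proof. by move=> h1 h2; apply: dvdz_trans h2. Qed.
Lemma cong0 d x : cong d x 0 <-> (d %| x)%Z.
Proof. by rewrite /cong subr0. Qed.
Lemma cong_eq d x y : x = y -> cong d x y.
Proof. by move->; apply: congR. Qed.
Lemma congMd d x y c : cong d x y -> cong (c * d) (c * x) (c * y).
Proof. by rewrite /cong -mulrBr => h; apply: dvdz_mul. Qed.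
Lemma cong_sum (I : finType) (P : pred I) d (F G : I -> int) :
  (forall i, P i -> cong d (F i) (G i)) ->
  cong d (\sum_(i | P i) F i) (\sum_(i | P i) G i).
Proof.
move=> h; elim/big_rec2: _ => [|i x y Pi hxy]; first exact: congR.
by apply: congD => //; apply: h.
Qed.

Lemma pow3E k : pow3 k = 3 ^+ k.
Proof. by rewrite /pow3 -natz natrX. Qed.
Lemma pow3D a b : pow3 (a + b) = pow3 a * pow3 b.
Proof. by rewrite !pow3E exprD. Qed.
Lemma pow3S a : pow3 a.+1 = 3 * pow3 a.
Proof. by rewrite !pow3E exprS. Qed.
Lemma pow3_dvd k l : (k <= l)%N -> (pow3 k %| pow3 l)%Z.
Proof. move=> h; rewrite -(subnKC h) pow3D; exact: dvdz_mulr. Qed.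
Lemma pow3_gt0 k : 0 < pow3 k.
Proof. by rewrite pow3E exprn_gt0. Qed.
Lemma pow3_neq0 k : pow3 k != 0.
Proof. by rewrite gt_eqF // pow3_gt0. Qed.

Lemma cohP x : is_Z3 x -> forall k, cong (pow3 k) (x k.+1) (x k).
Proof. by move=> h k; move: (h k); rewrite eqz_mod_dvd. Qed.

Lemma coh x k l : is_Z3 x -> (k <= l)%N -> cong (pow3 k) (x l) (x k).
Proof.
move=> hx; elim: l => [|l ih]; first by rewrite leqn0 => /eqP ->; apply: congR.
rewrite leq_eqVlt => /orP [/eqP <-|]; first exact: congR.
rewrite ltnS => hkl; apply: congT (ih hkl).
apply: cong_dvd (cohP hx l); exact: pow3_dvd.
Qed.

Lemma cong_dvdz d a b : cong d a b -> (d %| b)%Z -> (d %| a)%Z.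
Proof. by rewrite /cong => h1 h2; rewrite -(subrK b a); apply: rpredD. Qed.

Definition cohs (S : nat -> int) := forall k, cong (pow3 k) (S k.+1) (S k).

Lemma cohs_Z3 x : is_Z3 x -> cohs x.
Proof. exact: cohP. Qed.

Lemma cohs_le S k l : cohs S -> (k <= l)%N -> cong (pow3 k) (S l) (S k).
Proof.
move=> hx; elim: l => [|l ih]; first by rewrite leqn0 => /eqP ->; apply: congR.
rewrite leq_eqVlt => /orP [/eqP <-|]; first exact: congR.
rewrite ltnS => hkl; apply: congT (ih hkl).
apply: cong_dvd (hx l); exact: pow3_dvd.
Qed.

Lemma coprime3 u j : ~~ (3 %| u)%Z -> coprimez (pow3 j) u.
Proof.
move=> h; rewrite pow3E; apply: coprimezXl.
by rewrite coprimezE prime_coprime // -dvdzE.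
Qed.

Lemma dvd3_pow u j : ~~ (3 %| u)%Z -> forall w, (pow3 j %| u * w)%Z -> (pow3 j %| w)%Z.
Proof. move=> h w; rewrite Gauss_dvdzr //; exact: coprime3. Qed.

Lemma val_dvd x v K : is_Z3 x -> valZ3 x v -> (v <= K)%N -> (pow3 v %| x K)%Z.
Proof.
move=> hx [h1 _] hK; have := coh hx hK; rewrite /cong => h.
by rewrite -(subrK (x v) (x K)); apply: rpredD.
Qed.

Lemma val_unit x v K : is_Z3 x -> valZ3 x v -> (v < K)%N ->
  exists u, x K = pow3 v * u /\ ~~ (3 %| u)%Z.
Proof.
move=> hx hv hK; have hd := val_dvd hx hv (ltnW hK).
exists (x K %/ pow3 v)%Z; split; first by rewrite mulrC divzK.
apply/negP => h3; case: hv => _ /negP; apply.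
have : (pow3 v.+1 %| x K)%Z.
  rewrite -(divzK hd) pow3S; exact: dvdz_mul h3 (dvdzz _).
move=> hK'; apply: cong_dvdz hK'; apply: congS; exact: coh hx hK.
Qed.

Lemma val_exists x : is_Z3 x -> ~ eqZ3 x Z3zero -> exists v, valZ3 x v.
Proof.
move=> hx hnz.
have ex : exists k, ~~ (pow3 k %| x k)%Z.
  apply: NNPP => hn; apply: hnz => k; rewrite /Z3zero eqz_mod_dvd subr0.
  by apply: NNPP => hk; apply: hn; exists k; apply/negP.
case: (ex_minnP ex) => k hk hmin.
have k0 : k <> 0%N by move=> e; move: hk; rewrite e /pow3 expn0 dvd1z.
exists k.-1; split; last by rewrite prednK //; case: k k0 {hk hmin} => //.
have : ~~ ~~ (pow3 k.-1 %| x k.-1)%Z.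
  apply/negP => h; have := hmin _ h; case: k k0 {hk hmin h} => // k _.
  by rewrite /= ltnn.
by rewrite negbK.
Qed.

Lemma unit_nz y : ~~ (3 %| y 1%N)%Z -> ~ eqZ3 y Z3zero.
Proof. move=> h e; move: (e 1%N); by rewrite eqz_mod_dvd /Z3zero subr0 (negbTE h). Qed.

Lemma cancel_mul p S : is_Z3 p -> ~ eqZ3 p Z3zero -> cohs S ->
  (forall k, (pow3 k %| p k * S k)%Z) -> forall k, (pow3 k %| S k)%Z.
Proof.
move=> hp hnz hS h k.
case: (val_exists hp hnz) => v hv.
have [u [hu hu3]] := val_unit hp hv (leq_addl k v.+1 : (v < k + v.+1)%N).
have := h (k + v.+1)%N; rewrite hu (_ : (k + v.+1 = v + k.+1)%N); last by lia.
rewrite pow3D -mulrA dvdz_mul2l ?pow3_neq0 // => h2.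
have h3 := dvd3_pow hu3 h2.
have h4 : (pow3 k %| S (v + k.+1)%N)%Z.
  by apply: dvdz_trans h3; apply: pow3_dvd.
apply: cong_dvdz h4; apply: congS; apply: cohs_le hS _; lia.
Qed.

Lemma dec3 (u : int) : exists q r, u = 3 * q + r /\ (r = 0 \/ r = 1 \/ r = 2).
Proof.
exists (u %/ 3)%Z, (u %% 3)%Z; split; first by rewrite mulrC -divz_eq.
have h1 := modz_ge0 u (isT : (3 : int) != 0).
have h2 := ltz_pmod u (isT : (0 : int) < 3).
lia.
Qed.

Lemma dvd3E q r : (3 %| 3 * q + r)%Z = (3 %| r)%Z.
Proof.
have h : cong 3 (3 * q + r) r by rewrite /cong addrK dvdz_mulr.
apply/idP/idP => h'; first exact: cong_dvdz (congS h) h'.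
exact: cong_dvdz h h'.
Qed.

Lemma sq_mod3 (u : int) : ~~ (3 %| u)%Z -> (3 %| 1 - u ^+ 2)%Z.
Proof.
case: (dec3 u) => q [r [-> hr]]; rewrite dvd3E.
case: hr => [->|[->|->]] // _; apply/dvdzP.
- by exists (- (2 * q + 3 * q ^+ 2)); ring.
- by exists (- (4 * q + 3 * q ^+ 2) - 1); ring.
Qed.

Lemma ndvd3M a b : ~~ (3 %| a)%Z -> ~~ (3 %| b)%Z -> ~~ (3 %| a * b)%Z.
Proof.
move=> ha hb; have := coprime3 0 ha; rewrite /pow3 expn0 => _.
have hc : coprimez 3 a by rewrite coprimezE prime_coprime // -dvdzE.
by rewrite Gauss_dvdzr.
Qed.

Lemma ndvd3X a n : ~~ (3 %| a)%Z -> ~~ (3 %| a ^+ n)%Z.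
Proof.
move=> ha; elim: n => [|n ih]; first by rewrite expr0 dvdz1.
by rewrite exprS; apply: ndvd3M.
Qed.

Lemma Z3_cohs x : cohs x -> is_Z3 x.
Proof. by move=> h k; rewrite eqz_mod_dvd; exact: h. Qed.

Definition hstep (c d : nat -> int) (v k : nat) (y : int) : int :=
  let L := (v + k + 2)%N in
  let m := ((c L.+1 * y ^+ 3 - d L.+1) %/ pow3 L)%Z in
  let w := (c L.+1 %/ pow3 v)%Z in
  y + pow3 k.+1 * (- m * w * y ^+ 2).

Fixpoint hseq c d v x0 k : int :=
  if k is k'.+1 then hstep c d v k' (hseq c d v x0 k') else x0.

Lemma hensel_step c d v k y : is_Z3 c -> cohs d -> valZ3 c v ->
  ~~ (3 %| y)%Z ->
  (pow3 (v + k + 2) %| c (v + k + 2)%N * y ^+ 3 - d (v + k + 2)%N)%Z ->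
  ~~ (3 %| hstep c d v k y)%Z /\
  (pow3 (v + k.+1 + 2) %| c (v + k.+1 + 2)%N * (hstep c d v k y) ^+ 3
                         - d (v + k.+1 + 2)%N)%Z.
Proof.
move=> hc hd hv hy hI.
rewrite /hstep; set L := (v + k + 2)%N.
have eL : (v + k.+1 + 2 = L.+1)%N by rewrite /L; lia.
rewrite eL.
have hE : (pow3 L %| c L.+1 * y ^+ 3 - d L.+1)%Z.
  apply: cong_dvdz hI; apply: congB; last exact: hd.
  by apply: congMr; apply: cohP.
have hvL : (v < L.+1)%N by rewrite /L; lia.
have [w [hw hw3]] := val_unit hc hv hvL.
rewrite hw mulKz ?pow3_neq0 //.
set m := ((pow3 v * w * y ^+ 3 - d L.+1) %/ pow3 L)%Z.
have hm : d L.+1 = pow3 v * w * y ^+ 3 - m * pow3 L.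
  by rewrite /m divzK -?hw // opprB addrC subrK.
have [r hr] : exists r, 1 - (w * y ^+ 2) ^+ 2 = r * 3.
  by apply/dvdzP; apply: sq_mod3; apply: ndvd3M => //; apply: ndvd3X.
have e1 : pow3 k.+1 = 3 * pow3 k by rewrite pow3S.
have e2 : pow3 L = pow3 v * 9 * pow3 k.
  by rewrite /L !pow3D (_ : pow3 2 = 9) //; ring.
have e3 : pow3 L.+1 = pow3 v * 27 * pow3 k.
  by rewrite pow3S e2; ring.
split.
- rewrite e1 -mulrA addrC dvd3E //.
- rewrite hm e1 e2 e3.
  set t := - m * w * y ^+ 2; set P := pow3 v; set Q := pow3 k.
  have -> : P * w * (y + 3 * Q * t) ^+ 3 - (P * w * y ^+ 3 - m * (P * 9 * Q))
     = 9 * P * Q * m * (1 - (w * y ^+ 2) ^+ 2) + 27 * P * Q * (w * y * Q * t^+2 + w * Q^+2 * t^+3).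
    by rewrite /t; ring.
  rewrite hr; apply/dvdzP; exists (m * r + (w * y * Q * t^+2 + w * Q^+2 * t^+3)); ring.
Qed.

Lemma hensel c d v x0 : is_Z3 c -> cohs d -> valZ3 c v -> ~~ (3 %| x0)%Z ->
  (pow3 (v + 0 + 2) %| c (v + 0 + 2)%N * x0 ^+ 3 - d (v + 0 + 2)%N)%Z ->
  exists y, is_Z3 y /\ ~~ (3 %| y 1%N)%Z /\
            forall k, (pow3 k %| c k * y k ^+ 3 - d k)%Z.
Proof.
move=> hc hd hv hx0 h0.
have inv : forall k, ~~ (3 %| hseq c d v x0 k)%Z /\
   (pow3 (v + k + 2) %| c (v + k + 2)%N * (hseq c d v x0 k) ^+ 3 - d (v + k + 2)%N)%Z.
  elim=> [|k [ih1 ih2]] //=; exact: hensel_step.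
exists (hseq c d v x0); split; [|split].
- apply: Z3_cohs => k /=; rewrite /hstep /cong addrAC subrr add0r pow3S -mulrA.
  by rewrite mulrCA dvdz_mulr.
- by case: (inv 1%N).
- move=> k; case: (inv k) => _ h.
  have hk : (k <= v + k + 2)%N by lia.
  apply: (cong_dvdz _ (dvdz_trans (pow3_dvd hk) h)).
  apply: congB; [apply: congMr|]; apply: congS.
  + exact: coh.
  + exact: cohs_le.
Qed.

Definition Z3point n (a : 'I_n.+1 -> Z3) := exists z : 'I_n.+1 -> Z3,
  (forall i, is_Z3 (z i)) /\ (exists i, ~ eqZ3 (z i) Z3zero) /\
  forall k, (pow3 k %| \sum_i a i k * z i k ^+ 3)%Z.

Lemma Ucoef x e : is_Z3 x -> valZ3 x e -> x (e + 2)%N = pow3 e * (x (e + 2)%N %/ pow3 e)%Z.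
Proof. move=> hx hv; rewrite mulrC divzK //; apply: val_dvd hx hv _; lia. Qed.

Lemma Ucoef_unit x e : is_Z3 x -> valZ3 x e -> ~~ (3 %| (x (e + 2)%N %/ pow3 e))%Z.
Proof.
move=> hx hv; have he : (e < e + 2)%N by lia.
have [u [hu hu3]] := val_unit hx hv he.
by rewrite hu mulKz ?pow3_neq0.
Qed.

Lemma termcong x e m v : is_Z3 x -> valZ3 x e -> (v <= e + 3 * m)%N ->
  cong (pow3 (v + 2)) (pow3 (3 * m) * x (v + 2)%N)
                      (pow3 (e + 3 * m) * (x (e + 2)%N %/ pow3 e)%Z).
Proof.
move=> hx hv hle.
have -> : pow3 (e + 3 * m) * (x (e + 2)%N %/ pow3 e)%Z = pow3 (3 * m) * x (e + 2)%N.
  have hU := Ucoef hx hv; set U := (x (e + 2)%N %/ pow3 e)%Z in hU *.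
  by rewrite hU pow3D; ring.
case: (leqP v e) => h.
- apply: congMl; apply: congS; apply: coh => //; lia.
- have he : (e + 2 <= v + 2)%N by lia.
  have := congMd (pow3 (3 * m)) (coh hx he).
  rewrite -pow3D => h'; apply: cong_dvd h'.
  apply: pow3_dvd; lia.
Qed.

Lemma val_scale x e m : is_Z3 x -> valZ3 x e ->
  is_Z3 (fun k => pow3 (3 * m) * x k) /\ valZ3 (fun k => pow3 (3 * m) * x k) (e + 3 * m).
Proof.
move=> hx hv; split.
- by apply: Z3_cohs => k; apply: congMl; apply: cohP.
- split.
  + rewrite addnC pow3D; apply: dvdz_mul => //; apply: val_dvd hx hv _; lia.
  + apply/negP; rewrite (_ : (e + 3 * m).+1 = 3 * m + e.+1)%N; last lia.
    rewrite pow3D dvdz_mul2l ?pow3_neq0 // => h.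
    case: hv => _ /negP; apply; apply: (cong_dvdz _ h); apply: congS; apply: coh => //; lia.
Qed.

Lemma s_cube (s : int) : s = 0 \/ s = 1 \/ s = -1 -> s ^+ 3 = s.
Proof. by case=> [->|[->|->]]; rewrite ?expr0n //; ring. Qed.

Lemma s_ndvd (s : int) : s = 0 \/ s = 1 \/ s = -1 -> s != 0 -> ~~ (3 %| s)%Z.
Proof. by case=> [->|[->|->]]. Qed.

Lemma pow3M3 m : pow3 (3 * m) = pow3 m ^+ 3.
Proof. by rewrite !pow3E -exprM mulnC. Qed.

Lemma coreKL n (a : 'I_n.+1 -> Z3) (e : 'I_n.+1 -> nat) (s : 'I_n.+1 -> int)
    (m : 'I_n.+1 -> nat) v j :
  (forall i, is_Z3 (a i)) -> val_vec a e ->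
  (forall i, s i = 0 \/ s i = 1 \/ s i = -1) -> s j != 0 ->
  (e j + 3 * m j = v)%N -> (forall i, s i != 0 -> (v <= e i + 3 * m i)%N) ->
  (pow3 (v + 2) %| \sum_i pow3 (e i + 3 * m i) * (a i (e i + 2)%N %/ pow3 (e i))%Z * s i)%Z ->
  Z3point a.
Proof.
move=> ha hv hs hsj hjv hge hsum.
pose c := fun k => pow3 (3 * m j) * a j k.
pose d := fun k => - \sum_(i | i != j) a i k * (pow3 (m i) * s i) ^+ 3.
have [hc hcv] := val_scale (m j) (ha j) (hv j); rewrite hjv in hcv.
have hd : cohs d.
  move=> k; rewrite /d; apply: congN; apply: cong_sum => i _; apply: congMr; exact: cohP.
have key : forall k, c k * (s j) ^+ 3 - d k = \sum_i a i k * (pow3 (m i) * s i) ^+ 3.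
  move=> k; rewrite /d opprK [in RHS](bigD1 j) //= /c pow3M3; congr (_ + _); ring.
have hcond : (pow3 (v + 0 + 2) %| c (v + 0 + 2)%N * s j ^+ 3 - d (v + 0 + 2)%N)%Z.
  rewrite addn0 key; apply: (cong_dvdz _ hsum); apply: cong_sum => i _.
  case: (hs i) => [hi|hi].
    by rewrite hi; apply: cong_eq; ring.
  have hi0 : s i != 0 by case: hi => ->.
  rewrite exprMn (s_cube (hs i)) -pow3M3 mulrA (mulrC (a i _)).
  by apply: congMr; apply: termcong => //; apply: hge.
have [y [hy [hy1 hyk]]] := hensel hc hd hcv (s_ndvd (hs j) hsj) hcond.
exists (fun i => if i == j then (fun k => pow3 (m j) * y k) else (fun _ => pow3 (m i) * s i)).
split; [|split].
- move=> i; case: eqP => _; apply: Z3_cohs => k; first by apply: congMl; apply: cohP.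
  exact: congR.
- exists j; rewrite eqxx => hz; have := hz (m j).+1.
  rewrite eqz_mod_dvd /Z3zero subr0 pow3S (mulrC 3) dvdz_mul2l ?pow3_neq0 // => h3.
  have h1 : (1 <= (m j).+1)%N by [].
  have := coh hy h1; rewrite (_ : pow3 1 = 3) // => hc1.
  by move: hy1; rewrite (cong_dvdz (congS hc1) h3).
- move=> k; apply: (cong_dvdz _ (hyk k)); apply: cong_eq.
  rewrite /d opprK (bigD1 j) //= eqxx; congr (_ + _).
    by rewrite /c pow3M3; ring.
  by apply: eq_bigr => i /negbTE ->.
Qed.

Definition sgn : seq int := [:: 0; 1; -1].
Definition r9 : seq int := [:: 0; 1; 2; 3; 4; 5; 6; 7; 8].
Definition unitb (a : int) := ~~ (3 %| a)%Z.

Definition checkT (a b c : int) : bool :=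
  has (fun x => has (fun y => has (fun z =>
    ((x != 0) || (y != 0)) && (9 %| a * x + b * y + 3 * c * z)%Z) sgn) sgn) sgn.

Lemma checkT_all : all (fun a => all (fun b => all (fun c =>
   ~~ unitb a || ~~ unitb b || ~~ unitb c || checkT a b c) r9) r9) r9.
Proof. by vm_compute. Qed.

Definition checkP4 (a b c d : int) : bool :=
  has (fun x => has (fun y => has (fun z => has (fun w =>
    ((x != 0) || (y != 0) || (z != 0) || (w != 0)) &&
     (9 %| a * x + b * y + c * z + d * w)%Z) sgn) sgn) sgn) sgn.

Lemma checkP4_all : all (fun a => all (fun b => all (fun c => all (fun d =>
   ~~ unitb a || ~~ unitb b || ~~ unitb c || ~~ unitb d || checkP4 a b c d) r9) r9) r9) r9.
Proof. by vm_compute. Qed.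

Definition checkP3 (a b c : int) : bool :=
  has (fun x => has (fun y => has (fun z =>
    ((x != 0) || (y != 0) || (z != 0)) && (9 %| a * x + b * y + c * z)%Z) sgn) sgn) sgn.

Definition L6 : seq int := [:: 1; 2; 4; -1; -2; -4].
Definition fullb (a b c : int) : bool :=
  all (fun t => has (fun u => (9 %| t - u)%Z) L6 ==
                has (fun u => (9 %| t - u)%Z || (9 %| t + u)%Z) [:: a; b; c]) r9.

Lemma checkP3_all : all (fun a => all (fun b => all (fun c =>
   ~~ unitb a || ~~ unitb b || ~~ unitb c || (fullb a b c == ~~ checkP3 a b c)) r9) r9) r9.
Proof. by vm_compute. Qed.

Lemma mod9_in x : (x %% 9)%Z \in r9.
Proof.
have h1 := modz_ge0 x (isT : (9 : int) != 0).
have h2 := ltz_pmod x (isT : (0 : int) < 9).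
move: h1 h2; set r := (x %% 9)%Z => h1 h2.
have : r = 0 \/ r = 1 \/ r = 2 \/ r = 3 \/ r = 4 \/ r = 5 \/ r = 6 \/ r = 7 \/ r = 8 by lia.
by do 8 (case=> [->//|]); move->.
Qed.

Lemma cong9 x : cong 9 x (x %% 9)%Z.
Proof. by rewrite /cong {1}(divz_eq x 9) addrK dvdz_mull. Qed.

Lemma unitb9 x : unitb (x %% 9)%Z = unitb x.
Proof.
have h : cong 3 x (x %% 9)%Z by apply: cong_dvd (cong9 x).
rewrite /unitb; congr (~~ _); apply/idP/idP => h'.
- exact: cong_dvdz h h'.
- exact: cong_dvdz (congS h) h'.
Qed.

Lemma sgnP (x : int) : x \in sgn -> x = 0 \/ x = 1 \/ x = -1.
Proof. by rewrite !inE => /or3P [] /eqP ->; auto. Qed.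

Lemma finT (a b c : int) : unitb a -> unitb b -> unitb c ->
  exists x y z, x \in sgn /\ y \in sgn /\ z \in sgn /\ (x != 0 \/ y != 0) /\
   (9 %| a * x + b * y + 3 * c * z)%Z.
Proof.
move=> ha hb hc.
have := checkT_all => /allP /(_ _ (mod9_in a)) /allP /(_ _ (mod9_in b))
  /allP /(_ _ (mod9_in c)); rewrite !unitb9 ha hb hc /=.
case/hasP=> x hx /hasP [y hy /hasP [z hz /andP [hxy h9]]].
exists x, y, z; do 3 (split => //); split; first by case/orP: hxy; auto.
apply: (cong_dvdz _ h9); do 2 ?apply: congD; do ?apply: congMr;
  do ?apply: congMl; exact: cong9.
Qed.

Lemma finP4 (a b c d : int) : unitb a -> unitb b -> unitb c -> unitb d ->
  exists x y z w, x \in sgn /\ y \in sgn /\ z \in sgn /\ w \in sgn /\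
   (x != 0 \/ y != 0 \/ z != 0 \/ w != 0) /\
   (9 %| a * x + b * y + c * z + d * w)%Z.
Proof.
move=> ha hb hc hd.
have := checkP4_all => /allP /(_ _ (mod9_in a)) /allP /(_ _ (mod9_in b))
  /allP /(_ _ (mod9_in c)) /allP /(_ _ (mod9_in d)); rewrite !unitb9 ha hb hc hd /=.
case/hasP=> x hx /hasP [y hy /hasP [z hz /hasP [w hw /andP [hxy h9]]]].
exists x, y, z, w; do 4 (split => //); split.
  by case/orP: hxy => [/orP [/orP [] |]|]; auto.
apply: (cong_dvdz _ h9); do 3 ?apply: congD; do ?apply: congMr; exact: cong9.
Qed.

Lemma finP3 (a b c : int) : unitb a -> unitb b -> unitb c ->
  fullb (a %% 9)%Z (b %% 9)%Z (c %% 9)%Z <->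
  ~ exists x y z, x \in sgn /\ y \in sgn /\ z \in sgn /\ (x != 0 \/ y != 0 \/ z != 0) /\
   (9 %| a * x + b * y + c * z)%Z.
Proof.
move=> ha hb hc.
have := checkP3_all => /allP /(_ _ (mod9_in a)) /allP /(_ _ (mod9_in b))
  /allP /(_ _ (mod9_in c)); rewrite !unitb9 ha hb hc /= => /eqP ->.
have ceq : forall x y z : int, (9 %| a * x + b * y + c * z)%Z =
     (9 %| (a %% 9)%Z * x + (b %% 9)%Z * y + (c %% 9)%Z * z)%Z.
  move=> x y z; have hc9 : cong 9 (a * x + b * y + c * z)
     ((a %% 9)%Z * x + (b %% 9)%Z * y + (c %% 9)%Z * z).
    by do 2 ?apply: congD; do ?apply: congMr; exact: cong9.
  by apply/idP/idP => h; [exact: cong_dvdz (congS hc9) h | exact: cong_dvdz hc9 h].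
split.
- move=> /negP hn [x [y [z [hx [hy [hz [hxyz h9]]]]]]]; apply: hn.
  apply/hasP; exists x => //; apply/hasP; exists y => //; apply/hasP; exists z => //.
  rewrite -ceq h9 andbT; case: hxyz => [->|[->|->]] //; by rewrite ?orbT.
- move=> hn; apply/negP => /hasP [x hx /hasP [y hy /hasP [z hz /andP [hxyz h9]]]].
  apply: hn; exists x, y, z; do 3 (split => //); split; last by rewrite ceq.
  by case/orP: hxyz => [/orP []|]; auto.
Qed.

Lemma align (e W : nat) : (e %% 3 = W %% 3)%N -> (e <= W)%N -> exists m, (e + 3 * m = W)%N.
Proof.
move=> h1 h2; exists ((W - e) %/ 3)%N.
have : (3 %| W - e)%N by rewrite -eqn_mod_dvd // h1.
move/divnK; rewrite mulnC => ->; exact: subnKC.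
Qed.

Lemma sum3 n (F : 'I_n.+1 -> int) p q r : p != q -> p != r -> q != r ->
  (forall i, i != p -> i != q -> i != r -> F i = 0) ->
  \sum_i F i = F p + F q + F r.
Proof.
move=> hpq hpr hqr h.
rewrite (bigD1 p) //= (bigD1 q) /=; last by rewrite eq_sym.
rewrite (bigD1 r) /=; last by rewrite eq_sym hpr eq_sym.
rewrite big1 ?addr0 ?addrA // => i /andP [/andP [h1 h2] h3]; exact: h.
Qed.

Lemma sum4 n (F : 'I_n.+1 -> int) p q r t : p != q -> p != r -> q != r ->
  p != t -> q != t -> r != t ->
  (forall i, i != p -> i != q -> i != r -> i != t -> F i = 0) ->
  \sum_i F i = F p + F q + F r + F t.
Proof.
move=> hpq hpr hqr hpt hqt hrt h.
rewrite (bigD1 p) //= (bigD1 q) /=; last by rewrite eq_sym.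
rewrite (bigD1 r) /=; last by rewrite eq_sym hpr eq_sym.
rewrite (bigD1 t) /=; last by rewrite eq_sym hpt eq_sym hqt eq_sym.
rewrite big1 ?addr0 ?addrA // => i /andP [/andP [/andP [h1 h2] h3] h4]; exact: h.
Qed.

Lemma T_point n (a : 'I_n.+1 -> Z3) e p q r : (forall i, is_Z3 (a i)) -> val_vec a e ->
  p != q -> p != r -> q != r ->
  (e q %% 3 = e p %% 3)%N -> (e r %% 3 = (e p).+1 %% 3)%N -> Z3point a.
Proof.
move=> ha hv hpq hpr hqr hq hr.
pose U i := (a i (e i + 2)%N %/ pow3 (e i))%Z.
have hU : forall i, unitb (U i) by move=> i; apply: Ucoef_unit.
have [x [y [z [hx [hy [hz [hxy h9]]]]]]] := finT (hU p) (hU q) (hU r).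
pose V := (3 * (e p + e q + e r) + e p)%N.
have a1 : (e p %% 3 = V %% 3)%N by rewrite /V mulnC modnMDl.
have a2 : (e p <= V)%N by rewrite /V; lia.
have a3 : (e q %% 3 = V %% 3)%N by rewrite /V mulnC modnMDl.
have a4 : (e q <= V)%N by rewrite /V; lia.
have a5 : (e r %% 3 = V.+1 %% 3)%N by rewrite /V -addnS mulnC modnMDl.
have a6 : (e r <= V.+1)%N by rewrite /V; lia.
have [mp hmp] := align a1 a2.
have [mq hmq] := align a3 a4.
have [mr hmr] := align a5 a6.
pose s i := if i == p then x else if i == q then y else if i == r then z else 0.
pose mm i := if i == p then mp else if i == q then mq else if i == r then mr else 0%N.
have hqp : (q == p) = false by apply/negbTE; rewrite eq_sym.
have hrp : (r == p) = false by apply/negbTE; rewrite eq_sym.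
have hrq : (r == q) = false by apply/negbTE; rewrite eq_sym.
have sp : s p = x by rewrite /s eqxx.
have sq : s q = y by rewrite /s hqp eqxx.
have sr : s r = z by rewrite /s hrp hrq eqxx.
have mp' : mm p = mp by rewrite /mm eqxx.
have mq' : mm q = mq by rewrite /mm hqp eqxx.
have mr' : mm r = mr by rewrite /mm hrp hrq eqxx.
have s0 : forall i, i != p -> i != q -> i != r -> s i = 0.
  by move=> i /negbTE h1 /negbTE h2 /negbTE h3; rewrite /s h1 h2 h3.
pose j := if x != 0 then p else q.
apply: (@coreKL n a e s mm V j ha hv).
- move=> i; rewrite /s; case: ifP => _; first exact: sgnP.
  case: ifP => _; first exact: sgnP.
  case: ifP => _; first exact: sgnP.
  by left.
- by rewrite /j; case: ifP => [|/negbFE /eqP hx0]; rewrite ?sp ?sq //; case: hxy; rewrite ?hx0.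
- by rewrite /j; case: ifP => _; rewrite ?mp' ?mq'.
- move=> i hi.
  case: (eqVneq i p) => [->|hip]; first by rewrite mp' hmp.
  case: (eqVneq i q) => [->|hiq]; first by rewrite mq' hmq.
  case: (eqVneq i r) => [->|hir]; first by rewrite mr' hmr leqnSn.
  by move: hi; rewrite s0.
- rewrite (sum3 hpq hpr hqr); last by move=> i h1 h2 h3; rewrite s0 // mulr0.
  rewrite sp sq sr mp' mq' mr' hmp hmq hmr pow3S -/(U p) -/(U q) -/(U r).
  rewrite (pow3D V 2).
  rewrite [X in (_ %| X)%Z](_ : _ = pow3 V * (U p * x + U q * y + 3 * U r * z));
    last by rewrite /U; ring.
  exact: dvdz_mul (dvdzz _) h9.
Qed.

Lemma leV4 (x y u w : nat) : [/\ (x <= 3 * (x + y + u + w) + x)%N, (y <= 3 * (x + y + u + w) + x)%N,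
   (u <= 3 * (x + y + u + w) + x)%N & (w <= 3 * (x + y + u + w) + x)%N].
Proof. split; lia. Qed.

Lemma P4_point n (a : 'I_n.+1 -> Z3) e p q r t : (forall i, is_Z3 (a i)) -> val_vec a e ->
  p != q -> p != r -> q != r -> p != t -> q != t -> r != t ->
  (e q %% 3 = e p %% 3)%N -> (e r %% 3 = e p %% 3)%N -> (e t %% 3 = e p %% 3)%N ->
  Z3point a.
Proof.
move=> ha hv hpq hpr hqr hpt hqt hrt hq hr ht.
pose U i := (a i (e i + 2)%N %/ pow3 (e i))%Z.
have hU : forall i, unitb (U i) by move=> i; apply: Ucoef_unit.
have [x [y [z [w [hx [hy [hz [hw [hxy h9]]]]]]]]] := finP4 (hU p) (hU q) (hU r) (hU t).
pose V := (3 * (e p + e q + e r + e t) + e p)%N.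
have a1 : (e p %% 3 = V %% 3)%N by rewrite /V mulnC modnMDl.
case: (leV4 (e p) (e q) (e r) (e t)) => a2 a4 a6 a8.
have a3 : (e q %% 3 = V %% 3)%N by rewrite /V mulnC modnMDl.
have a5 : (e r %% 3 = V %% 3)%N by rewrite /V mulnC modnMDl.
have a7 : (e t %% 3 = V %% 3)%N by rewrite /V mulnC modnMDl.
have [mp hmp] := align a1 a2.
have [mq hmq] := align a3 a4.
have [mr hmr] := align a5 a6.
have [mt hmt] := align a7 a8.
pose s i := if i == p then x else if i == q then y else if i == r then z
            else if i == t then w else 0.
pose mm i := if i == p then mp else if i == q then mq else if i == r then mr
            else if i == t then mt else 0%N.
have hqp : (q == p) = false by apply/negbTE; rewrite eq_sym.
have hrp : (r == p) = false by apply/negbTE; rewrite eq_sym.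
have hrq : (r == q) = false by apply/negbTE; rewrite eq_sym.
have htp : (t == p) = false by apply/negbTE; rewrite eq_sym.
have htq : (t == q) = false by apply/negbTE; rewrite eq_sym.
have htr : (t == r) = false by apply/negbTE; rewrite eq_sym.
have sp : s p = x by rewrite /s eqxx.
have sq : s q = y by rewrite /s hqp eqxx.
have sr : s r = z by rewrite /s hrp hrq eqxx.
have st : s t = w by rewrite /s htp htq htr eqxx.
have mp' : mm p = mp by rewrite /mm eqxx.
have mq' : mm q = mq by rewrite /mm hqp eqxx.
have mr' : mm r = mr by rewrite /mm hrp hrq eqxx.
have mt' : mm t = mt by rewrite /mm htp htq htr eqxx.
have s0 : forall i, i != p -> i != q -> i != r -> i != t -> s i = 0.
  by move=> i /negbTE h1 /negbTE h2 /negbTE h3 /negbTE h4; rewrite /s h1 h2 h3 h4.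
pose j := if x != 0 then p else if y != 0 then q else if z != 0 then r else t.
have hsj : s j != 0.
  rewrite /j; case: ifP => [|/negbFE /eqP hx0]; rewrite ?sp //.
  case: ifP => [|/negbFE /eqP hy0]; rewrite ?sq //.
  case: ifP => [|/negbFE /eqP hz0]; rewrite ?sr //.
  rewrite st.
  by case: hxy => [|[|[]]]; rewrite ?hx0 ?hy0 ?hz0.
have hmj : (e j + 3 * mm j)%N = V.
  by rewrite /j; repeat case: ifP => _; rewrite ?mp' ?mq' ?mr' ?mt'.
apply: (@coreKL n a e s mm V j ha hv _ hsj hmj).
- move=> i; rewrite /s; do 4 (case: ifP => _; first exact: sgnP).
  by left.
- move=> i hi.
  case: (eqVneq i p) => [->|hip]; first by rewrite mp' hmp.
  case: (eqVneq i q) => [->|hiq]; first by rewrite mq' hmq.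
  case: (eqVneq i r) => [->|hir]; first by rewrite mr' hmr.
  case: (eqVneq i t) => [->|hit]; first by rewrite mt' hmt.
  by move: hi; rewrite s0.
- rewrite (sum4 hpq hpr hqr hpt hqt hrt); last by move=> i h1 h2 h3 h4; rewrite s0 // mulr0.
  rewrite sp sq sr st mp' mq' mr' mt' hmp hmq hmr hmt.
  rewrite (pow3D V 2).
  rewrite [X in (_ %| X)%Z](_ : _ = pow3 V * (U p * x + U q * y + U r * z + U t * w));
    last by rewrite /U; ring.
  exact: dvdz_mul (dvdzz _) h9.
Qed.

Lemma bigQ (I : eqType) (r : seq I) (F : I -> Q3) :
  (\big[Q3add/Q3zero]_(i <- r) F i).2 = (\sum_(i <- r) (F i).2)%N /\
  forall k, (\big[Q3add/Q3zero]_(i <- r) F i).1 k =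
     \sum_(i <- r) (F i).1 k * pow3 ((\sum_(i <- r) (F i).2)%N - (F i).2).
Proof.
elim: r => [|x r [ih1 ih2]]; first by split => [|k]; rewrite !big_nil.
rewrite !big_cons /=; split; first by rewrite ih1.
move=> k; rewrite ih1 ih2 big_cons addKn mulr_suml; congr (_ + _).
apply: eq_big_seq => i hi.
have hle : ((F i).2 <= \sum_(j <- r) (F j).2)%N.
  by rewrite (big_rem i) //= leq_addr.
by rewrite -mulrA -pow3D addnC addnBA.
Qed.

Lemma dvd_eqZ3 y : (forall k, (pow3 k %| y k)%Z) <-> eqZ3 y Z3zero.
Proof.
split=> h k; move: (h k); by rewrite eqz_mod_dvd /Z3zero subr0.
Qed.

Lemma nz_scale y c : is_Z3 y -> ~ eqZ3 y Z3zero -> ~ eqZ3 (fun k => y k * pow3 c) Z3zero.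
Proof.
move=> hy hnz /dvd_eqZ3 h; apply: hnz; apply/dvd_eqZ3 => k.
have := h (k + c)%N; rewrite pow3D dvdz_mul2r ?pow3_neq0 // => h1.
apply: (cong_dvdz _ h1); apply: congS; apply: coh => //; exact: leq_addr.
Qed.

Lemma nz_mul x y : is_Z3 x -> is_Z3 y -> ~ eqZ3 x Z3zero -> ~ eqZ3 y Z3zero ->
  ~ eqZ3 (fun k => x k * y k) Z3zero.
Proof.
move=> hx hy hnx hny /dvd_eqZ3 h.
have [v1 hv1] := val_exists hx hnx; have [v2 hv2] := val_exists hy hny.
have h1 : (v1 < v1 + v2 + 1)%N by lia.
have h2 : (v2 < v1 + v2 + 1)%N by lia.
have [u1 [e1 hu1]] := val_unit hx hv1 h1.
have [u2 [e2 hu2]] := val_unit hy hv2 h2.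
move: (h (v1 + v2 + 1)%N); rewrite e1 e2 !pow3D.
rewrite (_ : pow3 v1 * u1 * (pow3 v2 * u2) = pow3 v1 * pow3 v2 * (u1 * u2)); last ring.
rewrite dvdz_mul2l ?mulf_neq0 ?pow3_neq0 //.
by apply/negP; apply: ndvd3M.
Qed.

Lemma Z3point_Q3 n (a : 'I_n.+1 -> Z3) : Z3point a -> has_Q3_point a.
Proof.
case=> z [hz [[i0 hi0] hsum]].
exists (fun i => (z i, 0%N)); split; [by move=> i; exact: hz|split].
- exists i0; rewrite /Q3eq /= => h; apply: hi0 => k; move: (h k).
  by rewrite /pow3 expn0 !mulr1.
- have [h1 h2] := bigQ (index_enum 'I_n.+1)
     (fun i => Q3mul (Q3ofZ3 (a i)) (Q3cube (z i, 0%N))).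
  move=> k; rewrite /Z3zero /= mul0r mulr1 h2 eqz_mod_dvd subr0.
  have := hsum k; congr (_ %| _)%Z; apply: eq_bigr => i _ /=.
  rewrite big1_eq /Z3mul /pow3 /= expn0 mulr1; ring.
Qed.

Lemma Q3_Z3point n (a : 'I_n.+1 -> Z3) : has_Q3_point a -> Z3point a.
Proof.
case=> x [hx [[i0 hi0] hS]].
pose E := (\sum_i (x i).2)%N.
exists (fun i k => (x i).1 k * pow3 (E - (x i).2)); split; [|split].
- by move=> i; apply: Z3_cohs => k; apply: congMr; apply: cohP; apply: hx.
- exists i0; apply: nz_scale; first exact: hx.
  move=> h; apply: hi0 => k; move: (h k); rewrite /Z3zero /= !mul0r.
  by rewrite /pow3 expn0 mulr1.
- have [h1 h2] := bigQ (index_enum 'I_n.+1)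
     (fun i => Q3mul (Q3ofZ3 (a i)) (Q3cube (x i))).
  move=> k; move: (hS k); rewrite /Z3zero /= mul0r h2 eqz_mod_dvd subr0.
  rewrite /pow3 expn0 mulr1 -/(pow3 _).
  have hT : (\sum_(i <- index_enum 'I_n.+1)
      (Q3mul (Q3ofZ3 (a i)) (Q3cube (x i))).2 = 3 * E)%N.
    rewrite /E big_distrr /=; apply: eq_bigr => i _ /=; lia.
  rewrite hT; congr (_ %| _)%Z; apply: eq_bigr => i _ /=.
  rewrite (_ : (0 + ((x i).2 + ((x i).2 + (x i).2)))%N = 3 * (x i).2)%N; last lia.
  rewrite -mulnBr -/(pow3 (3 * _)) -/(pow3 (E - _)) pow3M3 /Z3mul; ring.
Qed.

Lemma Q3nz (P : Q3) : ~ Q3eq P Q3zero -> ~ eqZ3 P.1 Z3zero.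
Proof.
move=> h e; apply: h => k; move: (e k); rewrite /Z3zero /= !mul0r.
by rewrite /pow3 expn0 mulr1.
Qed.

Lemma simeq_point n (X Y : 'I_n.+1 -> Z3) : (forall i, is_Z3 (Y i)) ->
  simeq X Y -> Z3point X -> Z3point Y.
Proof.
move=> hY [al [als [s [hal [hnal [hals hrel]]]]]] [w [hw [[i0 hi0] hwsum]]].
pose p := al.1; pose D := al.2; pose q i := (als i).1; pose N i := (als i).2.
pose Nt := (\sum_i N i)%N; pose R i := (Nt - N i)%N.
have hNR : forall i, (N i + R i = Nt)%N.
  move=> i; rewrite /R subnKC // /Nt (bigD1 i) //=; exact: leq_addr.
have hq : forall i, is_Z3 (q i) by move=> i; case: (hals i).
have hqnz : forall i, ~ eqZ3 (q i) Z3zero by move=> i; case: (hals i) => _; apply: Q3nz.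
have hpnz : ~ eqZ3 p Z3zero by apply: Q3nz.
pose z j := fun k => w (s^-1 j)%g k * q (s^-1 j)%g k * pow3 (R (s^-1 j)%g).
have hz : forall j, is_Z3 (z j).
  move=> j; apply: Z3_cohs => k; apply: congMr; apply: congM; apply: cohP; auto.
exists z; split; [exact: hz|split].
- exists (s i0); rewrite /z permK; apply: nz_scale.
    by apply: Z3_cohs => k; apply: congM; apply: cohP; auto.
  by apply: nz_mul; auto.
- apply: (cancel_mul hal hpnz).
    by move=> k; apply: cong_sum => j _; apply: congM; [|apply: congX]; apply: cohP.
  move=> k; rewrite mulr_sumr (reindex_inj (@perm_inj _ s)) /=.
  apply: (cong_dvdz _ (dvdz_mull (pow3 (D + 3 * Nt)) (hwsum k))).
  rewrite mulr_sumr; apply: cong_sum => i _.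
  rewrite /z permK.
  have := hrel i k; rewrite eqz_mod_dvd /= -/(congr1 _ _) => hr.
  have hr' : cong (pow3 k) (p k * Y (s i) k * (q i k * (q i k * q i k)))
                           (X i k * pow3 (D + 3 * N i)).
    apply: congS; move: hr; rewrite /cong /Z3mul /pow3 expn0 mulr1 -/(pow3 _).
    by rewrite /D /N (_ : (al.2 + 0 + ((als i).2 + ((als i).2 + (als i).2)) =
       al.2 + 3 * (als i).2)%N) //; lia.
  apply: (congT (y := p k * Y (s i) k * (q i k * (q i k * q i k)) * (w i k * pow3 (R i)) ^+ 3)).
    by apply: cong_eq; rewrite /p /q; ring.
  apply: (congT (y := X i k * pow3 (D + 3 * N i) * (w i k * pow3 (R i)) ^+ 3)).
    exact: congMr.
  apply: cong_eq; rewrite -(hNR i) mulnDr addnA !pow3D (_ : pow3 0 = 1) //; ring.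
Qed.

Definition o0 : 'I_4 := @Ordinal 4 0 isT.
Definition o1 : 'I_4 := @Ordinal 4 1 isT.
Definition o2 : 'I_4 := @Ordinal 4 2 isT.
Definition o3 : 'I_4 := @Ordinal 4 3 isT.

Lemma ord4_cases (i : 'I_4) : i = o0 \/ i = o1 \/ i = o2 \/ i = o3.
Proof.
case: i => [[|[|[|[|m]]]] hm]; [left|right;left|right;right;left|right;right;right|];
  try by apply: val_inj.
by [].
Qed.

Lemma sum_ord4 (F : 'I_4 -> int) : \sum_i F i = F o0 + F o1 + F o2 + F o3.
Proof.
rewrite (@sum4 3 F o0 o1 o2 o3) //.
by move=> i; case: (ord4_cases i) => [->|[->|[->|->]]]; rewrite eqxx.
Qed.

Lemma coh_min x m k l : is_Z3 x -> (m <= k)%N -> (m <= l)%N -> cong (pow3 m) (x k) (x l).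
Proof.
move=> hx hk hl; case: (leqP k l) => h.
- apply: congS; apply: cong_dvd (coh hx h); exact: pow3_dvd.
- apply: cong_dvd (coh hx (ltnW h)); exact: pow3_dvd.
Qed.

Lemma cube9 (y : int) : exists s, s \in sgn /\ cong 9 (y ^+ 3) s /\ (s = 0 <-> (3 %| y)%Z).
Proof.
case: (dec3 y) => q [r [-> hr]]; rewrite dvd3E.
case: hr => [->|[->|->]].
- exists 0; split=> //; split=> //; apply/cong0/dvdzP.
  by exists (3 * q ^+ 3); ring.
- exists 1; split=> //; split=> //; rewrite /cong; apply/dvdzP.
  by exists (3 * q ^+ 3 + 3 * q ^+ 2 + q); ring.
- exists (-1); split=> //; split=> //; rewrite /cong; apply/dvdzP.
  by exists (3 * q ^+ 3 + 6 * q ^+ 2 + 4 * q + 1); ring.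
Qed.

Lemma cong_dvdE d x y : cong d x y -> (d %| x)%Z = (d %| y)%Z.
Proof. by move=> h; apply/idP/idP => h'; [exact: cong_dvdz (congS h) h' | exact: cong_dvdz h h']. Qed.

Definition hasL (A B C r : int) :=
  has (fun u => (9 %| r - u)%Z || (9 %| r + u)%Z) [:: A; B; C].
Definition hasR (r : int) := has (fun u => (9 %| r - u)%Z) L6.

Lemma hasL_mod A B C r : hasL A B C r = hasL A B C (r %% 9)%Z.
Proof.
rewrite /hasL /=; do 2 (rewrite (cong_dvdE (congB (cong9 r) (congR _ _)));
  rewrite (cong_dvdE (congD (cong9 r) (congR _ _)))).
by rewrite (cong_dvdE (congB (cong9 r) (congR _ C))) (cong_dvdE (congD (cong9 r) (congR _ C))).
Qed.

Lemma hasR_mod r : hasR r = hasR (r %% 9)%Z.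
Proof.
rewrite /hasR; apply: eq_in_has => u _ /=.
exact: (cong_dvdE (congB (cong9 r) (congR _ _))).
Qed.

Lemma full_iff (b : 'I_4 -> Z3) :
  residues_full b <-> fullb (b o0 2%N %% 9)%Z (b o1 2%N %% 9)%Z (b o2 2%N %% 9)%Z.
Proof.
set A := (b o0 2%N %% 9)%Z; set B := (b o1 2%N %% 9)%Z; set C := (b o2 2%N %% 9)%Z.
have hL : forall r : int, (exists i : 'I_4, (i < 3)%N /\
        ((r == b i 2%N %[mod 9])%Z \/ (r == - b i 2%N %[mod 9])%Z)) <-> hasL A B C r.
  move=> r.
  have ex : forall x : int, ((r == x %[mod 9])%Z || (r == - x %[mod 9])%Z) =
              (9 %| r - (x %% 9)%Z)%Z || (9 %| r + (x %% 9)%Z)%Z.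
    move=> x; rewrite !eqz_mod_dvd opprK.
    rewrite (cong_dvdE (congB (congR _ r) (cong9 x))).
    by rewrite (cong_dvdE (congD (congR _ r) (cong9 x))).
  rewrite /hasL /= orbF; split.
  - case=> i [hi hr]; have := ex (b i 2%N).
    have -> : ((r == b i 2%N %[mod 9])%Z || (r == - b i 2%N %[mod 9])%Z) by case: hr => ->; rewrite ?orbT.
    case: (ord4_cases i) hi => [->|[->|[->|->]]] // _ <-; by rewrite ?orbT.
  - rewrite -!ex => /orP [h | /orP [h | h]].
    + by exists o0; split => //; case/orP: h => h; [left|right].
    + by exists o1; split => //; case/orP: h => h; [left|right].
    + by exists o2; split => //; case/orP: h => h; [left|right].
have hR : forall r : int, (exists t : int, t \in [:: 1; 2; 4; -1; -2; -4] /\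
        (r == t %[mod 9])%Z) <-> hasR r.
  move=> r; split.
  - by case=> t [ht hrt]; apply/hasP; exists t => //; rewrite -eqz_mod_dvd.
  - by case/hasP => t ht h; exists t; split => //; rewrite eqz_mod_dvd.
split.
- move=> hf; apply/allP => t _; apply/eqP; apply/idP/idP.
  + by move/hR/(hf t)/hL.
  + by move/hL/(hf t)/hR.
- move=> /allP hf r; rewrite hL hR hasL_mod hasR_mod.
  have := hf _ (mod9_in r) => /eqP; rewrite -/(hasR _) -/(hasL A B C _) => ->.
  by [].
Qed.

Definition f0002 := vec4 [:: 0; 0; 0; 2]%N.

Lemma units0002 (b : 'I_4 -> Z3) : (forall i, is_Z3 (b i)) -> val_vec b f0002 ->
  [/\ unitb (b o0 2%N), unitb (b o1 2%N) & unitb (b o2 2%N)].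
Proof.
move=> hb hv.
have h : forall i, f0002 i = 0%N -> unitb (b i 2%N).
  move=> i hi; have := Ucoef_unit (hb i) (hv i); rewrite hi /= (_ : pow3 0 = 1) //.
  by rewrite divz1.
by split; apply: h.
Qed.

Lemma point_0002 (b : 'I_4 -> Z3) : (forall i, is_Z3 (b i)) -> val_vec b f0002 ->
  ~ residues_full b -> Z3point b.
Proof.
move=> hb hv hnf.
case: (units0002 hb hv) => h0 h1 h2.
have [x [y [z [hx [hy [hz [hxyz h9]]]]]]] : exists x y z, x \in sgn /\ y \in sgn /\ z \in sgn /\
   (x != 0 \/ y != 0 \/ z != 0) /\ (9 %| b o0 2%N * x + b o1 2%N * y + b o2 2%N * z)%Z.
  apply: NNPP => hn; apply: hnf; apply/full_iff; exact/(finP3 h0 h1 h2).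
pose s i := if i == o0 then x else if i == o1 then y else if i == o2 then z else 0.
pose j := if x != 0 then o0 else if y != 0 then o1 else o2.
have so0 : s o0 = x by [].
have so1 : s o1 = y by [].
have so2 : s o2 = z by [].
have hsj : s j != 0.
  rewrite /j; case: (eqVneq x 0) => [hx0|hx0] /=; last by rewrite so0.
  case: (eqVneq y 0) => [hy0|hy0] /=; last by rewrite so1.
  by rewrite so2; case: hxyz => [|[]]; rewrite ?hx0 ?hy0.
have hej : (f0002 j + 3 * 0 = 0)%N by rewrite /j; repeat case: ifP => _.
apply: (@coreKL 3 b f0002 s (fun _ => 0%N) 0 j hb hv _ hsj hej) => //.
- move=> i; rewrite /s; do 3 (case: ifP => _; first exact: sgnP).
  by left.
- rewrite sum_ord4 /s /= (_ : pow3 0 = 1) // !divz1 !mul1r mulr0 addr0.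
  exact: h9.
Qed.

Lemma nopoint_0002 (b : 'I_4 -> Z3) : (forall i, is_Z3 (b i)) -> val_vec b f0002 ->
  residues_full b -> ~ Z3point b.
Proof.
move=> hb hv /full_iff hf [z [hz [[i0 hi0] hsum]]].
case: (units0002 hb hv) => h0 h1 h2.
have hnos := proj1 (finP3 h0 h1 h2) hf.
suff P : forall t i, (pow3 t %| z i t)%Z by apply: hi0; apply/dvd_eqZ3 => k; apply: P.
elim=> [|t ih] i; first by rewrite (_ : pow3 0 = 1) // dvd1z.
pose K := (3 * t + 3)%N.
have hzK : forall i, (pow3 t %| z i K)%Z.
  move=> i'; apply: (cong_dvdz _ (ih i')); apply: coh => //; rewrite /K; lia.
pose y i := (z i K %/ pow3 t)%Z.
have hy : forall i, z i K = y i * pow3 t by move=> i'; rewrite /y divzK.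
have h27 : (27 %| \sum_i b i K * y i ^+ 3)%Z.
  have := hsum K; rewrite (eq_bigr (fun i => pow3 (3 * t) * (b i K * y i ^+ 3))); last first.
    by move=> i' _; rewrite hy pow3M3; ring.
  rewrite -mulr_sumr /K pow3D (_ : pow3 3 = 27) // dvdz_mul2l ?pow3_neq0 //.
have hb3 : cong 27 (b o3 K) (9 * (b o3 4%N %/ 9)%Z).
  have hv3 := hv o3; have := Ucoef (hb o3) hv3; rewrite /= (_ : pow3 2 = 9) // => <-.
  by apply: (coh_min (m := 3)) => //; rewrite /K; lia.
have hU3 : unitb (b o3 4%N %/ 9)%Z.
  by have := Ucoef_unit (hb o3) (hv o3); rewrite /= (_ : pow3 2 = 9).
have hbi : forall i, cong 9 (b i K) (b i 2%N).
  by move=> i'; apply: (coh_min (m := 2)) => //; rewrite /K; lia.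
have [s0 [hs0 [hc0 he0]]] := cube9 (y o0).
have [s1 [hs1 [hc1 he1]]] := cube9 (y o1).
have [s2 [hs2 [hc2 he2]]] := cube9 (y o2).
have h9 : (9 %| b o0 2%N * s0 + b o1 2%N * s1 + b o2 2%N * s2)%Z.
  move: h27; rewrite sum_ord4 => h27.
  have h9' : (9 %| b o0 K * y o0 ^+ 3 + b o1 K * y o1 ^+ 3 + b o2 K * y o2 ^+ 3
              + b o3 K * y o3 ^+ 3)%Z by apply: dvdz_trans h27.
  apply: (cong_dvdz _ h9'); apply: congS.
  rewrite -[X in cong _ _ X]addr0; apply: congD.
    by apply: congD; [apply: congD|]; apply: congM; auto.
  apply/cong0; apply: dvdz_mulr.
  apply: (cong_dvdz (cong_dvd (isT : (9 %| 27)%Z) hb3)); exact: dvdz_mulr (dvdzz 9).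
have [e0 e1' e2'] : [/\ s0 = 0, s1 = 0 & s2 = 0].
  case: (eqVneq s0 0) => [e0|n0]; last by case: hnos; exists s0, s1, s2; do 4 split => //; left.
  case: (eqVneq s1 0) => [e1|n1]; last by case: hnos; exists s0, s1, s2; do 4 split => //; right; left.
  case: (eqVneq s2 0) => [e2|n2]; last by case: hnos; exists s0, s1, s2; do 4 split => //; right; right.
  by [].
have d0 : (3 %| y o0)%Z by apply/he0.
have d1 : (3 %| y o1)%Z by apply/he1.
have d2 : (3 %| y o2)%Z by apply/he2.
have c27 : forall i, (3 %| y i)%Z -> (27 %| b i K * y i ^+ 3)%Z.
  move=> i' /dvdzP [w ->]; rewrite (_ : (w * 3) ^+ 3 = w ^+ 3 * 27); last ring.
  by rewrite mulrA; apply: dvdz_mull.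
have d3 : (3 %| y o3)%Z.
  move: h27; rewrite sum_ord4 => h27.
  have h3 : (27 %| b o3 K * y o3 ^+ 3)%Z.
    rewrite -(addKr (b o0 K * y o0 ^+ 3 + b o1 K * y o1 ^+ 3 + b o2 K * y o2 ^+ 3)
                    (b o3 K * y o3 ^+ 3)).
    apply: rpredD => //; rewrite rpredN.
    by apply: rpredD; [apply: rpredD|]; apply: c27.
  have := cong_dvdz (congS (congMr (y o3 ^+ 3) hb3)) h3.
  rewrite (_ : (27 : int) = 9 * 3) // -mulrA dvdz_mul2l // => h.
  apply/negP => hn; move: h; rewrite Gauss_dvdzr.
    by apply/negP; apply: ndvd3X; apply/negP.
  by rewrite coprimezE prime_coprime // -dvdzE.
have all3 : forall i, (3 %| y i)%Z by move=> i'; case: (ord4_cases i') => [->|[->|[->|->]]].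
have hK : (t.+1 <= K)%N by rewrite /K; lia.
apply: (cong_dvdz (congS (coh (hz i) hK))).
rewrite hy; case/dvdzP: (all3 i) => w ->; rewrite pow3S; apply/dvdzP; exists w; ring.
Qed.

Lemma int_split (c : int) : exists C D : nat, c = C%:Z - D%:Z.
Proof. case: c => [n|n]; [exists n, 0%N | exists 0%N, n.+1]; rewrite ?NegzE; ring. Qed.

Definition cst (C : nat) : Z3 := fun _ => pow3 C.

Lemma cst_Z3 C : is_Z3 (cst C).
Proof. by apply: Z3_cohs => k; apply: congR. Qed.

Lemma cst_nz C D : ~ Q3eq (cst C, D) Q3zero.
Proof.
move=> h; move: (h C.+1); rewrite /cst /= mul0r eqz_mod_dvd subr0.
rewrite (_ : pow3 0 = 1) // mulr1 pow3S -[X in (_ %| X)%Z]mul1r.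
by rewrite dvdz_mul2r ?pow3_neq0.
Qed.

Definition unitpart (x : Z3) (e : nat) : Z3 := fun k => (x (k + e)%N %/ pow3 e)%Z.

Lemma unitpartE x e k : is_Z3 x -> valZ3 x e -> pow3 e * unitpart x e k = x (k + e)%N.
Proof. move=> hx hv; rewrite mulrC divzK //; apply: val_dvd hx hv _; exact: leq_addl. Qed.

Lemma unitpart_Z3 x e : is_Z3 x -> valZ3 x e -> is_Z3 (unitpart x e).
Proof.
move=> hx hv; apply: Z3_cohs => k.
rewrite /cong -(dvdz_mul2l (pow3_neq0 e)) mulrBr !unitpartE // -pow3D (addnC e k) addSn.
exact: cohP hx (k + e)%N.
Qed.

Lemma lin_aux (f D N e C M : nat) (c m : int) : f%:Z = e%:Z + c + 3 * m ->
  c = C%:Z - D%:Z -> m = M%:Z - N%:Z -> (f + D + 3 * N = e + C + 3 * M)%N.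
Proof. lia. Qed.

Lemma perm_aux (x y z u v w : nat) : (x + y + z = u + v + w)%N -> (y + z + x = v + w + u)%N.
Proof. lia. Qed.

Lemma normalize n (a : 'I_n.+1 -> Z3) (e f : 'I_n.+1 -> nat) :
  (forall i, is_Z3 (a i)) -> val_vec a e ->
  simv (fun i => (e i)%:Z) (fun i => (f i)%:Z) ->
  exists b : 'I_n.+1 -> Z3, (forall i, is_Z3 (b i)) /\ val_vec b f /\
     simeq b a /\ simeq a b.
Proof.
move=> ha hv [s [c [m hrel]]].
have [C [D hCD]] := int_split c.
have [MN hMN] : exists MN : 'I_n.+1 -> (nat * nat), forall i,
    m i = (MN i).1%:Z - (MN i).2%:Z.
  apply: (@fin_all_exists _ (fun _ => (nat * nat)%type)
           (fun i u => m i = u.1%:Z - u.2%:Z)) => i.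
  by have [M [N e']] := int_split (m i); exists (M, N).
pose M i := (MN i).1; pose N i := (MN i).2.
have hN : forall i, m i = (M i)%:Z - (N i)%:Z by exact: hMN.
pose b i : Z3 := fun k => pow3 (f i) * unitpart (a (s i)) (e (s i)) k.
have hexp : forall i, (f i + D + 3 * N i = e (s i) + C + 3 * M i)%N.
  by move=> i; apply: (lin_aux (hrel i) hCD (hN i)).
have core : forall i k, cong (pow3 k) (pow3 (D + 3 * N i) * b i k)
                                   (pow3 (C + 3 * M i) * a (s i) k).
  move=> i k; rewrite /b mulrA -pow3D (perm_aux (hexp i)) pow3D -mulrA.
  rewrite unitpartE //; apply: congMl; apply: coh => //; exact: leq_addr.
have hb : forall i, is_Z3 (b i).
  by move=> i; apply: Z3_cohs => k; apply: congMl; apply: cohP; apply: unitpart_Z3.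
exists b; split => //; split; [|split].
- move=> i; split; first by apply: dvdz_mulr.
  apply/negP; rewrite /b pow3S (mulrC 3) dvdz_mul2l ?pow3_neq0 //.
  have hlt : (e (s i) < (f i).+1 + e (s i))%N by rewrite addSn ltnS leq_addl.
  have [w [hw hw3]] := val_unit (ha (s i)) (hv (s i)) hlt.
  by rewrite /unitpart hw mulKz ?pow3_neq0 //; apply/negP.
- exists (cst C, D), (fun i => (cst (M i), N i)), s.
  split; first exact: cst_Z3.
  split; first exact: cst_nz.
  split; first by move=> i; split; [exact: cst_Z3 | exact: cst_nz].
  move=> i k; rewrite eqz_mod_dvd /= /cst /Z3mul /=.
  have := core i k; rewrite /cong (_ : pow3 0 = 1) // mulr1.
  rewrite (_ : (D + 0 + (N i + (N i + N i)))%N = (D + 3 * N i))%N; last lia.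
  rewrite (_ : pow3 C * a (s i) k * (pow3 (M i) * (pow3 (M i) * pow3 (M i))) =
               pow3 (C + 3 * M i) * a (s i) k); last by rewrite pow3D pow3M3; ring.
  by rewrite mulrC.
- exists (cst D, C), (fun j => (cst (N (s^-1 j)%g), M (s^-1 j)%g)), (s^-1)%g.
  split; first exact: cst_Z3.
  split; first exact: cst_nz.
  split; first by move=> i; split; [exact: cst_Z3 | exact: cst_nz].
  move=> j k; rewrite eqz_mod_dvd /= /cst /Z3mul /=.
  have := core (s^-1 j)%g k; rewrite permKV /cong (_ : pow3 0 = 1) // mulr1.
  rewrite (_ : (C + 0 + (M (s^-1 j)%g + (M (s^-1 j)%g + M (s^-1 j)%g)))%N =
               (C + 3 * M (s^-1 j)%g))%N; last lia.
  rewrite (_ : pow3 D * b (s^-1 j)%g k * (pow3 (N (s^-1 j)%g) * (pow3 (N (s^-1 j)%g) * pow3 (N (s^-1 j)%g))) =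
               pow3 (D + 3 * N (s^-1 j)%g) * b (s^-1 j)%g k); last by rewrite pow3D pow3M3; ring.
  by move=> h; rewrite (mulrC (a j k)) -opprB rpredN.
Qed.

Definition targets : seq (seq nat) :=
  [:: [:: 0; 0; 0; 0]; [:: 0; 0; 0; 1]; [:: 0; 0; 1; 1]; [:: 0; 0; 1; 2]; [:: 0; 0; 0; 2]]%N.

Definition chk (r : seq nat) := has (fun l => has (fun c =>
  perm_eq [seq (x %% 3)%N | x <- l] [seq ((x + c) %% 3)%N | x <- r]) (iota 0 3)) targets.

Lemma chk_all : all (fun r0 => all (fun r1 => all (fun r2 => all (fun r3 =>
   chk [:: r0; r1; r2; r3]) (iota 0 3)) (iota 0 3)) (iota 0 3)) (iota 0 3).
Proof. by vm_compute. Qed.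

Lemma enum4 : enum 'I_4 = [:: o0; o1; o2; o3].
Proof. by apply: (inj_map val_inj); rewrite val_enum_ord. Qed.

Lemma mktuple4 (F : 'I_4 -> nat) : val [tuple F i | i < 4] = [:: F o0; F o1; F o2; F o3].
Proof. by rewrite /= enum4. Qed.

Lemma nat_cong_dvd (x y : nat) : (x %% 3 = y %% 3)%N -> (3 %| x%:Z - y%:Z)%Z.
Proof. by move=> h; rewrite -eqz_mod_dvd !modz_nat h. Qed.

Lemma mod3_in (x : nat) : (x %% 3)%N \in iota 0 3.
Proof. by rewrite mem_iota add0n ltn_pmod. Qed.

Lemma classify (e : 'I_4 -> nat) :
  exists2 l, l \in targets & simv (fun i => (e i)%:Z) (fun i => (vec4 l i)%:Z).
Proof.
have := chk_all => /allP /(_ _ (mod3_in (e o0))) /allP /(_ _ (mod3_in (e o1)))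
  /allP /(_ _ (mod3_in (e o2))) /allP /(_ _ (mod3_in (e o3))).
case/hasP => l hl /hasP [c _ hpe].
exists l => //.
have hsz : size l = 4%N.
  by move: hl; rewrite !inE => /orP [/eqP->|/orP [/eqP->|/orP [/eqP->|/orP [/eqP->|/eqP->]]]].
pose t := [tuple ((e i + c) %% 3)%N | i < 4].
have hpe' : perm_eq [tuple (vec4 l i %% 3)%N | i < 4] t.
  rewrite /t !mktuple4; move: hpe hsz.
  case: l {hl} => [|x0 [|x1 [|x2 [|x3 [|]]]]] // hpe _.
  by move: hpe; rewrite /vec4 /= !modnDml.
case/tuple_permP: hpe' => p hp.
have hpt : forall i, (vec4 l i %% 3 = (e (p i) + c) %% 3)%N.
  move=> i; have := congr1 (fun s : seq nat => nth 0%N s i) hp.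
  by rewrite !nth_mktuple /t tnth_mktuple.
exists p, c%:Z, (fun i => (((vec4 l i)%:Z - (e (p i) + c)%N%:Z) %/ 3)%Z) => i.
have h3 := nat_cong_dvd (hpt i).
rewrite mulrC divzK // PoszD; ring.
Qed.

Lemma rel_aux (ei ej fi fj d : nat) (c mi mj : int) :
  fi%:Z = ei%:Z + c + 3 * mi -> fj%:Z = ej%:Z + c + 3 * mj -> (fj = fi + d)%N ->
  ej%:Z = (ei + d)%N%:Z + (mi - mj) * 3.
Proof. move=> h1 h2 h3; rewrite h3 in h2; lia. Qed.

Lemma rel_mod (ei ej fi fj d : nat) (c mi mj : int) :
  fi%:Z = ei%:Z + c + 3 * mi -> fj%:Z = ej%:Z + c + 3 * mj -> (fj = fi + d)%N ->
  (ej %% 3 = (ei + d) %% 3)%N.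
Proof.
move=> h1 h2 h3; have := rel_aux h1 h2 h3 => h.
have : (ej%:Z %% 3)%Z = ((ei + d)%N%:Z %% 3)%Z by rewrite h addrC modzMDl.
by rewrite !modz_nat => -[].
Qed.

Lemma point_i (a : 'I_4 -> Z3) e l : (forall i, is_Z3 (a i)) -> val_vec a e ->
  simv (fun i => (e i)%:Z) (fun i => (vec4 l i)%:Z) ->
  l \in [:: [:: 0; 0; 0; 0]; [:: 0; 0; 0; 1]; [:: 0; 0; 1; 1]; [:: 0; 0; 1; 2]]%N ->
  Z3point a.
Proof.
move=> ha hv [s [c [m hrel]]] hl.
have d01 : s o0 != s o1 by rewrite (inj_eq (@perm_inj _ s)).
have d02 : s o0 != s o2 by rewrite (inj_eq (@perm_inj _ s)).
have d03 : s o0 != s o3 by rewrite (inj_eq (@perm_inj _ s)).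
have d12 : s o1 != s o2 by rewrite (inj_eq (@perm_inj _ s)).
have d13 : s o1 != s o3 by rewrite (inj_eq (@perm_inj _ s)).
have d23 : s o2 != s o3 by rewrite (inj_eq (@perm_inj _ s)).
have R := fun i j d (h : (vec4 l j = vec4 l i + d)%N) => rel_mod (hrel i) (hrel j) h.
move: hl; rewrite !inE => /orP [/eqP hl|/orP [/eqP hl|/orP [/eqP hl|/eqP hl]]]; subst l.
- apply: (P4_point ha hv d01 d02 d12 d03 d13 d23).
  + by rewrite (R o0 o1 0%N) // addn0.
  + by rewrite (R o0 o2 0%N) // addn0.
  + by rewrite (R o0 o3 0%N) // addn0.
- apply: (T_point ha hv d01 d03 d13).
  + by rewrite (R o0 o1 0%N) // addn0.
  + by rewrite (R o0 o3 1%N) // addn1.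
- apply: (T_point ha hv d01 d02 d12).
  + by rewrite (R o0 o1 0%N) // addn0.
  + by rewrite (R o0 o2 1%N) // addn1.
- apply: (T_point ha hv d01 d02 d12).
  + by rewrite (R o0 o1 0%N) // addn0.
  + by rewrite (R o0 o2 1%N) // addn1.
Qed.

Definition I5 := iota 0 5.
Definition tc (r : seq nat) p q t := [&& p != q, p != t, q != t,
  nth 0 r q == nth 0 r p & nth 0 r t == (nth 0 r p).+1 %% 3]%N.
Definition pc (r : seq nat) p q t u := [&& p != q, p != t, q != t, p != u &
  [&& q != u, t != u, nth 0 r q == nth 0 r p, nth 0 r t == nth 0 r p & nth 0 r u == nth 0 r p]]%N.
Definition pat5 (r : seq nat) :=
  has (fun p => has (fun q => has (fun t => tc r p q t) I5) I5) I5 ||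
  has (fun p => has (fun q => has (fun t => has (fun u => pc r p q t u) I5) I5) I5) I5.

Lemma pat5_all : all (fun r0 => all (fun r1 => all (fun r2 => all (fun r3 => all (fun r4 =>
  pat5 [:: r0; r1; r2; r3; r4]) (iota 0 3)) (iota 0 3)) (iota 0 3)) (iota 0 3)) (iota 0 3).
Proof. by vm_compute. Qed.

Lemma part2 n (a : 'I_n.+1 -> Z3) e : (4 <= n)%N -> (forall i, is_Z3 (a i)) ->
  val_vec a e -> Z3point a.
Proof.
move=> hn ha hv.
pose r := [seq (e (inord i) %% 3)%N | i <- I5].
have hr : forall i, (i < 5)%N -> nth 0%N r i = (e (inord i) %% 3)%N.
  by move=> i hi; rewrite /r (nth_map 0%N) ?size_iota // nth_iota.
have hin : forall i j, (i < 5)%N -> (j < 5)%N -> i != j -> (inord i : 'I_n.+1) != inord j.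
  move=> i j hi hj hij; apply/negP => /eqP /(congr1 (@nat_of_ord _)).
  rewrite !inordK; [by move/eqP; rewrite (negbTE hij)| |]; apply: leq_trans hn; by [].
have := pat5_all => /allP /(_ _ (mod3_in (e (inord 0)))) /allP /(_ _ (mod3_in (e (inord 1))))
  /allP /(_ _ (mod3_in (e (inord 2)))) /allP /(_ _ (mod3_in (e (inord 3))))
  /allP /(_ _ (mod3_in (e (inord 4)))).
rewrite -[[:: _; _; _; _; _]]/r.
case/orP.
- case/hasP => p; rewrite mem_iota add0n => hp /hasP [q]; rewrite mem_iota add0n => hq.
  case/hasP => t; rewrite mem_iota add0n => ht.
  case/and5P => hpq hpt hqt /eqP e1 /eqP e2.
  apply: (T_point ha hv (hin _ _ hp hq hpq) (hin _ _ hp ht hpt) (hin _ _ hq ht hqt)).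
  + by rewrite -hr // e1 hr.
  + by rewrite -hr // e2 hr // -addn1 modnDml addn1.
- case/hasP => p; rewrite mem_iota add0n => hp /hasP [q]; rewrite mem_iota add0n => hq.
  case/hasP => t; rewrite mem_iota add0n => ht.
  case/hasP => u; rewrite mem_iota add0n => hu.
  case/and5P => hpq hpt hqt hpu /and5P [hqu htu /eqP e1 /eqP e2 /eqP e3].
  apply: (P4_point ha hv (hin _ _ hp hq hpq) (hin _ _ hp ht hpt) (hin _ _ hq ht hqt)
     (hin _ _ hp hu hpu) (hin _ _ hq hu hqu) (hin _ _ ht hu htu)).
  + by rewrite -hr // e1 hr.
  + by rewrite -hr // e2 hr.
  + by rewrite -hr // e3 hr.
Qed.

Lemma vals n (a : 'I_n.+1 -> Z3) : (forall i, is_Z3 (a i)) ->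
  ~ eqZ3 (fun k => \prod_i a i k) Z3zero -> exists e, val_vec a e.
Proof.
move=> ha hnz; apply: (@fin_all_exists _ (fun _ => nat) (fun i v => valZ3 (a i) v)) => i.
apply: val_exists => // /dvd_eqZ3 hi.
apply: hnz; apply/dvd_eqZ3 => k; rewrite (bigD1 i) //=; exact: dvdz_mulr (hi k).
Qed.

Theorem proposition3p6 :
  (forall a : 'I_4 -> Z3,
     (forall i, is_Z3 (a i)) ->
     ~ eqZ3 (fun k => \prod_(i < 4) a i k) Z3zero ->
     (has_Q3_point a <->
        (val_sim4 a [:: 0; 0; 0; 0]%N \/ val_sim4 a [:: 0; 0; 0; 1]%N \/
         val_sim4 a [:: 0; 0; 1; 1]%N \/ val_sim4 a [:: 0; 0; 1; 2]%N) \/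
        (val_sim4 a [:: 0; 0; 0; 2]%N /\
         exists b : 'I_4 -> Z3,
           (forall i, is_Z3 (b i)) /\ simeq b a /\
           val_vec b (vec4 [:: 0; 0; 0; 2]%N) /\ ~ residues_full b)))
  /\
  (forall (n : nat) (a : 'I_n.+1 -> Z3),
     (4 <= n)%N ->
     (forall i, is_Z3 (a i)) ->
     ~ eqZ3 (fun k => \prod_(i < n.+1) a i k) Z3zero ->
     has_Q3_point a).
Proof.
split.
- move=> a ha hnz; have [e he] := vals ha hnz; split.
  + move/Q3_Z3point => hp; have [l hl hs] := classify e.
    have ex : val_sim4 a l by exists e.
    move: hl; rewrite !inE => /orP [/eqP hl|/orP [/eqP hl|/orP [/eqP hl|/orP [/eqP hl|/eqP hl]]]];
      subst l.
    * by left; left.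
    * by left; right; left.
    * by left; right; right; left.
    * by left; right; right; right.
    * right; split => //.
      have [b [hb [hvb [hba hab]]]] := normalize ha he hs.
      exists b; split => //; split => //; split => //.
      move=> hf; apply: (nopoint_0002 hb hvb hf).
      exact: (simeq_point hb hab hp).
  + move=> h; apply: Z3point_Q3.
    case: h => [[h|[h|[h|h]]]|[_ [b [hb [hsim [hvb hnf]]]]]].
    * case: h => e' [hv' hs']; apply: (point_i ha hv' hs'); by rewrite !inE eqxx ?orbT.
    * case: h => e' [hv' hs']; apply: (point_i ha hv' hs'); by rewrite !inE eqxx ?orbT.
    * case: h => e' [hv' hs']; apply: (point_i ha hv' hs'); by rewrite !inE eqxx ?orbT.
    * case: h => e' [hv' hs']; apply: (point_i ha hv' hs'); by rewrite !inE eqxx ?orbT.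
    * apply: (simeq_point ha hsim); exact: point_0002 hb hvb hnf.
- move=> n a hn ha hnz; apply: Z3point_Q3.
  have [e he] := vals ha hnz; exact: part2 hn ha he.
Qed.
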